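(* (i) For every context $\Gamma$: if $\Gamma\ \mathrm{ok}_s$ then $\Gamma\ \mathrm{ok}$. (ii) For every context $\Gamma$ and terms $M,A$: if $\Gamma\vdash_s M:A$ then $\Gamma\vdash M:A$.
   Context: Let $\mathcal V$ (the variables) be a type with decidable equality, equipped with functions $\mathrm{encode}:\mathcal V\to\mathbb N$ and $\mathrm{decode}:\mathbb N\to\mathcal V$ such that $\mathrm{encode}(\mathrm{decode}\,n)=n$ for all $n$. Let $\mathcal C$ (the constants) be any type. Terms $\Lambda$ are generated by: $c\,k$ ($k\in\mathcal C$), $v\,x$ ($x\in\mathcal V$), $\lambda[x:A]M$, $\Pi[x:A]B$ and $M\cdot N$; in $\lambda[x:A]M$ and $\Pi[x:A]B$ the name $x$ binds in $M$ (resp. $B$) but not in $A$. Terms are raw first-order syntax (not identified up to renaming of bound variables) and $\equiv$ denotes syntactic identity. The list of free variables is $\mathrm{fv}(c\,k)=[\,]$, $\mathrm{fv}(v\,x)=[x]$, $\mathrm{fv}(\lambda[x:A]M)=\mathrm{fv}\,A\mathbin{+\!\!+}(\mathrm{fv}\,M-x)$, $\mathrm{fv}(\Pi[x:A]B)=\mathrm{fv}\,A\mathbin{+\!\!+}(\mathrm{fv}\,B-x)$, $\mathrm{fv}(M\cdot N)=\mathrm{fv}\,M\mathbin{+\!\!+}\mathrm{fv}\,N$, where $\mathbin{+\!\!+}$ is list concatenation and $xs-x$ deletes every occurrence of $x$ from $xs$. Fix a function $\chi':\mathrm{List}\,\mathbb N\to\mathbb N$ with $\chi'(ns)\notin ns$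 for every list $ns$, and put $X'(xs)=\mathrm{decode}(\chi'(\mathrm{map}\ \mathrm{encode}\ xs))$. A substitution is any function $\sigma:\mathcal V\to\Lambda$; $\iota=v$ is the identity substitution; $(\sigma,x:=N)(y)=N$ if $y=x$ and $\sigma\,y$ otherwise. For a substitution $\sigma$ and a list $xs$ of variables, $X(\sigma,xs)=X'(\text{concatenation of the lists }\mathrm{fv}(\sigma\,y)\text{ for }y\in xs)$. The action $M\bullet\sigma$ is defined by structural recursion: $c\,k\bullet\sigma=c\,k$; $v\,x\bullet\sigma=\sigma\,x$; $(M\cdot N)\bullet\sigma=(M\bullet\sigma)\cdot(N\bullet\sigma)$; $(\lambda[x:A]M)\bullet\sigma=\lambda[y:A\bullet\sigma](M\bullet(\sigma,x:=v\,y))$ with $y=X(\sigma,\mathrm{fv}\,M-x)$; $(\Pi[x:A]B)\bullet\sigma=\Pi[y:A\bullet\sigma](B\bullet(\sigma,x:=v\,y))$ with $y=X(\sigma,\mathrm{fv}\,B-x)$. Unary substitution is $M[x:=N]=M\bullet(\iota,x:=N)$. $\alpha$-conversion $\sim_\alpha$ is the inductively defined relation with rules: $c\,k\sim_\alpha c\,k$; $v\,x\sim_\alpha v\,x$; $M\cdot N\sim_\alpha M'\cdot N'$ if $M\sim_\alpha M'$ and $N\sim_\alpha N'$; $\lambda[x:A]M\sim_\alpha\lambda[x':A']M'$ if $A\sim_\alpha A'$ and there is a variable $y$ with $y\notin\mathrm{fv}\,M-x$, $y\notin\mathrm{fv}\,M'-x'$ and $M[x:=v\,y]\equiv M'[x':=v\,y]$;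 and the same rule with $\Pi$ in place of $\lambda$. $\beta$-contraction is $(\lambda[x:A]M)\cdot N\ \triangleright_\beta\ M[x:=N]$. One-step $\beta$-reduction $\to_\beta$ is its contextual closure, inductively: $M\to_\beta N$ if $M\triangleright_\beta N$; $\lambda[x:A]M\to_\beta\lambda[x:A]M'$ and $\Pi[x:A]M\to_\beta\Pi[x:A]M'$ if $M\to_\beta M'$; $\lambda[x:A]M\to_\beta\lambda[x:A']M$ and $\Pi[x:A]M\to_\beta\Pi[x:A']M$ if $A\to_\beta A'$; $M\cdot P\to_\beta N\cdot P$ and $P\cdot M\to_\beta P\cdot N$ if $M\to_\beta N$. $\beta$-conversion $\simeq_\beta$ is the equivalence (reflexive–symmetric–transitive) closure of $\sim_\alpha\cup\to_\beta$. Pure Type System: fix a binary relation $\mathcal A\subseteq\mathcal C\times\mathcal C$ (axioms) and a ternary relation $\mathcal R\subseteq\mathcal C\times\mathcal C\times\mathcal C$ (rules). A context is a finite list of pairs $(x,A)$ with $x\in\mathcal V$, $A\in\Lambda$; $\Gamma,x:A$ denotes the list $(x,A)::\Gamma$; $\mathrm{dom}\,\Gamma$ is the list of first components; $(x,A)\in\Gamma$ is list membership. The judgments $\Gamma\ \mathrm{ok}$ and $\Gamma\vdash M:A$ are defined mutually inductively by: (nil) $[\,]\ \mathrm{ok}$; (cons) if $\Gamma\ \mathrm{ok}$, $\Gamma\vdash A:c\,s$ and $x\notin\mathrm{dom}\,\Gamma$ then $\Gamma,x:A\ \mathrm{ok}$; (sort) if $\Gamma\ \mathrm{ok}$ and $\mathcal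 A\,s_1\,s_2$ then $\Gamma\vdash c\,s_1:c\,s_2$; (var) if $\Gamma\ \mathrm{ok}$ and $(x,A)\in\Gamma$ then $\Gamma\vdash v\,x:A$; (prod) if $\mathcal R\,s_1\,s_2\,s_3$, $\Gamma\vdash A:c\,s_1$ and for every $y\notin\mathrm{dom}\,\Gamma$, $\Gamma,y:A\vdash B[x:=v\,y]:c\,s_2$, then $\Gamma\vdash\Pi[x:A]B:c\,s_3$; (abs) if $\mathcal R\,s_1\,s_2\,s_3$, $\Gamma\vdash A:c\,s_1$, for every $z\notin\mathrm{dom}\,\Gamma$, $\Gamma,z:A\vdash B[y:=v\,z]:c\,s_2$, and for every $z\notin\mathrm{dom}\,\Gamma$, $\Gamma,z:A\vdash M[x:=v\,z]:B[y:=v\,z]$, then $\Gamma\vdash\lambda[x:A]M:\Pi[y:A]B$; (app) if $\Gamma\vdash M:\Pi[x:A]B$, $\Gamma\vdash N:A$ and $\Gamma\vdash B[x:=N]:c\,s$ for some $s$, then $\Gamma\vdash M\cdot N:B[x:=N]$; (conv) if $\Gamma\vdash M:A$, $A\simeq_\beta B$ and $\Gamma\vdash B:c\,s$ for some $s$, then $\Gamma\vdash M:B$. (The premises quantified over all fresh names in (prod) and (abs) are infinitely branching.) Finitary (standard) presentation: the judgments $\Gamma\ \mathrm{ok}_s$ and $\Gamma\vdash_s M:A$ are defined mutually inductively by: (nil) $[\,]\ \mathrm{ok}_s$; (cons) if $\Gamma\ \mathrm{ok}_s$, $\Gamma\vdash_s A:c\,s$ and $x\notin\mathrm{dom}\,\Gamma$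 then $\Gamma,x:A\ \mathrm{ok}_s$; (sort) if $\Gamma\ \mathrm{ok}_s$ and $\mathcal A\,s_1\,s_2$ then $\Gamma\vdash_s c\,s_1:c\,s_2$; (var) if $\Gamma\ \mathrm{ok}_s$ and $(x,A)\in\Gamma$ then $\Gamma\vdash_s v\,x:A$; (prod) if $\mathcal R\,s_1\,s_2\,s_3$, $y\notin\mathrm{fv}\,B-x$, $\Gamma\vdash_s A:c\,s_1$ and $\Gamma,y:A\vdash_s B[x:=v\,y]:c\,s_2$, then $\Gamma\vdash_s\Pi[x:A]B:c\,s_3$; (abs) if $\mathcal R\,s_1\,s_2\,s_3$, $z\notin\mathrm{fv}\,M-x$, $z\notin\mathrm{fv}\,B-y$, $\Gamma\vdash_s A:c\,s_1$, $\Gamma,z:A\vdash_s B[y:=v\,z]:c\,s_2$ and $\Gamma,z:A\vdash_s M[x:=v\,z]:B[y:=v\,z]$, then $\Gamma\vdash_s\lambda[x:A]M:\Pi[y:A]B$; (app) if $\Gamma\vdash_s M:\Pi[x:A]B$ and $\Gamma\vdash_s N:A$ then $\Gamma\vdash_s M\cdot N:B[x:=N]$; (conv) if $\Gamma\vdash_s M:A$, $A\simeq_\beta B$ and $\Gamma\vdash_s B:c\,s$ for some $s$, then $\Gamma\vdash_s M:B$. *)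

(* Defs.v *)
From Stdlib Require Import List Arith.
Import ListNotations.

Section PTS.

Variable V : Type.
Variable V_eq_dec : forall x y : V, {x = y} + {x <> y}.
Variable encode : V -> nat.
Variable decode : nat -> V.
Variable C : Type.
(* The fresh-name function chi' : list nat -> nat (its freshness property is a
   hypothesis of the main theorem; it is not needed to define the syntax). *)
Variable chi' : list nat -> nat.

Inductive term : Type :=
| tc : C -> term
| tv : V -> term
| tlam : V -> term -> term -> term   (* lam[x:A]M  =  tlam x A M *)
| tpi : V -> term -> term -> term    (* Pi[x:A]B   =  tpi x A B *)
| tapp : term -> term -> term.

Definition remove_var (xs : list V) (x : V) : list V :=
  filter (fun y => if V_eq_dec y x then false else true) xs.

Fixpoint fv (t : term) : list V :=
  match t with
  | tc _ => []
  | tv x => [x]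
  | tlam x A M => fv A ++ remove_var (fv M) x
  | tpi x A B => fv A ++ remove_var (fv B) x
  | tapp M N => fv M ++ fv N
  end.

Definition X' (xs : list V) : V := decode (chi' (map encode xs)).

Definition subst := V -> term.

Definition iota : subst := tv.

Definition upd (s : subst) (x : V) (N : term) : subst :=
  fun y => if V_eq_dec y x then N else s y.

Definition Xs (s : subst) (xs : list V) : V :=
  X' (flat_map (fun y => fv (s y)) xs).

Fixpoint act (t : term) (s : subst) : term :=
  match t with
  | tc k => tc k
  | tv x => s x
  | tapp M N => tapp (act M s) (act N s)
  | tlam x A M =>
      let y := Xs s (remove_var (fv M) x) in
      tlam y (act A s) (act M (upd s x (tv y)))
  | tpi x A B =>
      let y := Xs s (remove_var (fv B) x) in
      tpi y (act A s) (act B (upd s x (tv y)))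
  end.

Definition subst1 (M : term) (x : V) (N : term) : term := act M (upd iota x N).

Inductive alpha : term -> term -> Prop :=
| alpha_c : forall k, alpha (tc k) (tc k)
| alpha_v : forall x, alpha (tv x) (tv x)
| alpha_app : forall M N M' N', alpha M M' -> alpha N N' ->
    alpha (tapp M N) (tapp M' N')
| alpha_lam : forall x A M x' A' M' y, alpha A A' ->
    ~ In y (remove_var (fv M) x) -> ~ In y (remove_var (fv M') x') ->
    subst1 M x (tv y) = subst1 M' x' (tv y) ->
    alpha (tlam x A M) (tlam x' A' M')
| alpha_pi : forall x A M x' A' M' y, alpha A A' ->
    ~ In y (remove_var (fv M) x) -> ~ In y (remove_var (fv M') x') ->
    subst1 M x (tv y) = subst1 M' x' (tv y) ->
    alpha (tpi x A M) (tpi x' A' M').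

Inductive beta_contr : term -> term -> Prop :=
| beta_c : forall x A M N, beta_contr (tapp (tlam x A M) N) (subst1 M x N).

Inductive beta_step : term -> term -> Prop :=
| bs_contr : forall M N, beta_contr M N -> beta_step M N
| bs_lam_body : forall x A M M', beta_step M M' -> beta_step (tlam x A M) (tlam x A M')
| bs_pi_body : forall x A M M', beta_step M M' -> beta_step (tpi x A M) (tpi x A M')
| bs_lam_dom : forall x A A' M, beta_step A A' -> beta_step (tlam x A M) (tlam x A' M)
| bs_pi_dom : forall x A A' M, beta_step A A' -> beta_step (tpi x A M) (tpi x A' M)
| bs_app_l : forall M N P, beta_step M N -> beta_step (tapp M P) (tapp N P)
| bs_app_r : forall M N P, beta_step M N -> beta_step (tapp P M) (tapp P N).

Inductive beta_conv : term -> term -> Prop :=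
| bc_alpha : forall M N, alpha M N -> beta_conv M N
| bc_beta : forall M N, beta_step M N -> beta_conv M N
| bc_refl : forall M, beta_conv M M
| bc_sym : forall M N, beta_conv M N -> beta_conv N M
| bc_trans : forall M N P, beta_conv M N -> beta_conv N P -> beta_conv M P.

Definition context := list (V * term).
Definition dom (G : context) : list V := map fst G.

Variable Ax : C -> C -> Prop.
Variable Rl : C -> C -> C -> Prop.

Inductive wf : context -> Prop :=
| wf_nil : wf []
| wf_cons : forall G x A s, wf G -> typing G A (tc s) -> ~ In x (dom G) ->
    wf ((x, A) :: G)
with typing : context -> term -> term -> Prop :=
| ty_sort : forall G s1 s2, wf G -> Ax s1 s2 -> typing G (tc s1) (tc s2)
| ty_var : forall G x A, wf G -> In (x, A) G -> typing G (tv x) A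
| ty_prod : forall G x A B s1 s2 s3, Rl s1 s2 s3 ->
    typing G A (tc s1) ->
    (forall y, ~ In y (dom G) -> typing ((y, A) :: G) (subst1 B x (tv y)) (tc s2)) ->
    typing G (tpi x A B) (tc s3)
| ty_abs : forall G x y A B M s1 s2 s3, Rl s1 s2 s3 ->
    typing G A (tc s1) ->
    (forall z, ~ In z (dom G) -> typing ((z, A) :: G) (subst1 B y (tv z)) (tc s2)) ->
    (forall z, ~ In z (dom G) ->
       typing ((z, A) :: G) (subst1 M x (tv z)) (subst1 B y (tv z))) ->
    typing G (tlam x A M) (tpi y A B)
| ty_app : forall G M N x A B s,
    typing G M (tpi x A B) -> typing G N A -> typing G (subst1 B x N) (tc s) ->
    typing G (tapp M N) (subst1 B x N)
| ty_conv : forall G M A B s,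
    typing G M A -> beta_conv A B -> typing G B (tc s) -> typing G M B.

Inductive wf_s : context -> Prop :=
| wfs_nil : wf_s []
| wfs_cons : forall G x A s, wf_s G -> typing_s G A (tc s) -> ~ In x (dom G) ->
    wf_s ((x, A) :: G)
with typing_s : context -> term -> term -> Prop :=
| tys_sort : forall G s1 s2, wf_s G -> Ax s1 s2 -> typing_s G (tc s1) (tc s2)
| tys_var : forall G x A, wf_s G -> In (x, A) G -> typing_s G (tv x) A
| tys_prod : forall G x y A B s1 s2 s3, Rl s1 s2 s3 ->
    ~ In y (remove_var (fv B) x) ->
    typing_s G A (tc s1) ->
    typing_s ((y, A) :: G) (subst1 B x (tv y)) (tc s2) ->
    typing_s G (tpi x A B) (tc s3)
| tys_abs : forall G x y z A B M s1 s2 s3, Rl s1 s2 s3 ->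
    ~ In z (remove_var (fv M) x) -> ~ In z (remove_var (fv B) y) ->
    typing_s G A (tc s1) ->
    typing_s ((z, A) :: G) (subst1 B y (tv z)) (tc s2) ->
    typing_s ((z, A) :: G) (subst1 M x (tv z)) (subst1 B y (tv z)) ->
    typing_s G (tlam x A M) (tpi y A B)
| tys_app : forall G M N x A B,
    typing_s G M (tpi x A B) -> typing_s G N A ->
    typing_s G (tapp M N) (subst1 B x N)
| tys_conv : forall G M A B s,
    typing_s G M A -> beta_conv A B -> typing_s G B (tc s) -> typing_s G M B.

End PTS.

(* Main.v *)
Require Import Defs.
From Stdlib Require Import List.
Import ListNotations.

Section Proofs.
Variable V : Type.
Variable V_eq_dec : forall x y : V, {x = y} + {x <> y}.
Variable encode : V -> nat.
Variable decode : nat -> V.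
Hypothesis encode_decode : forall n, encode (decode n) = n.
Variable C : Type.
Variable chi' : list nat -> nat.
Hypothesis chi'_fresh : forall ns, ~ In (chi' ns) ns.
Variable Ax : C -> C -> Prop.
Variable Rl : C -> C -> C -> Prop.

Local Notation tm := (term V C).
Local Notation tc := (Defs.tc V C).
Local Notation tv := (Defs.tv V C).
Local Notation tlam := (Defs.tlam V C).
Local Notation tpi := (Defs.tpi V C).
Local Notation tapp := (Defs.tapp V C).
Local Notation fv := (Defs.fv V V_eq_dec C).
Local Notation act := (Defs.act V V_eq_dec encode decode C chi').
Local Notation subst1 := (Defs.subst1 V V_eq_dec encode decode C chi').
Local Notation upd := (Defs.upd V V_eq_dec C).
Local Notation iota := (Defs.iota V C).
Local Notation Xs := (Defs.Xs V V_eq_dec encode decode C chi').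
Local Notation X' := (Defs.X' V encode decode chi').
Local Notation remove_var := (Defs.remove_var V V_eq_dec).
Local Notation alpha := (Defs.alpha V V_eq_dec encode decode C chi').
Local Notation beta_step := (Defs.beta_step V V_eq_dec encode decode C chi').
Local Notation beta_conv := (Defs.beta_conv V V_eq_dec encode decode C chi').
Local Notation typ := (Defs.typing V V_eq_dec encode decode C chi' Ax Rl).
Local Notation wfc := (Defs.wf V V_eq_dec encode decode C chi' Ax Rl).
Local Notation dom := (Defs.dom V C).

Lemma remove_var_In : forall l x y, In y (remove_var l x) <-> In y l /\ y <> x.
Proof.
  intros l x y; unfold Defs.remove_var; rewrite filter_In.
  destruct (V_eq_dec y x); split; intuition congruence.
Qed.

Lemma remove_var_notin : forall l y, ~ In y l -> remove_var l y = l.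
Proof.
  induction l as [|a l IH]; intros y H; simpl; auto.
  destruct (V_eq_dec a y). subst; simpl in H; tauto.
  f_equal. apply IH. simpl in H; tauto.
Qed.

Lemma remove_var_app : forall l1 l2 x, remove_var (l1 ++ l2) x = remove_var l1 x ++ remove_var l2 x.
Proof. intros; unfold Defs.remove_var; apply filter_app. Qed.

Lemma X'_fresh : forall l, ~ In (X' l) l.
Proof.
  intros l H. apply (chi'_fresh (map encode l)). unfold Defs.X' in H.
  apply (in_map encode) in H. rewrite encode_decode in H. exact H.
Qed.

Lemma Xs_fresh : forall s l, ~ In (Xs s l) (flat_map (fun v => fv (s v)) l).
Proof. intros; unfold Defs.Xs; apply X'_fresh. Qed.

Lemma flat_map_ext_in : forall (A B : Type) (f g : A -> list B) l,
  (forall x, In x l -> f x = g x) -> flat_map f l = flat_map g l.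
Proof.
  induction l; intros H; simpl; auto. rewrite H by (left; auto). f_equal. apply IHl.
  intros; apply H; right; auto.
Qed.

Lemma flat_map_flat_map : forall (A B D : Type) (f : A -> list B) (g : B -> list D) l,
  flat_map g (flat_map f l) = flat_map (fun x => flat_map g (f x)) l.
Proof. induction l; simpl; auto. rewrite flat_map_app, IHl; auto. Qed.

Lemma flat_map_single : forall (A : Type) (l : list A), flat_map (fun v => [v]) l = l.
Proof. induction l; simpl; congruence. Qed.

Lemma act_ext : forall M s t, (forall v, In v (fv M) -> s v = t v) -> act M s = act M t.
Proof.
  induction M; intros s t H; simpl in *; auto.
  - assert (E : Xs s (remove_var (fv M2) v) = Xs t (remove_var (fv M2) v)).
    { unfold Defs.Xs; f_equal. apply flat_map_ext_in. intros u Hu. f_equal. apply H.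
      apply in_or_app; right; auto. }
    rewrite E, (IHM1 s t) by (intros; apply H; apply in_or_app; auto).
    f_equal. apply IHM2. intros u Hu. unfold Defs.upd. destruct (V_eq_dec u v); auto.
    apply H. apply in_or_app; right. apply remove_var_In; auto.
  - assert (E : Xs s (remove_var (fv M2) v) = Xs t (remove_var (fv M2) v)).
    { unfold Defs.Xs; f_equal. apply flat_map_ext_in. intros u Hu. f_equal. apply H.
      apply in_or_app; right; auto. }
    rewrite E, (IHM1 s t) by (intros; apply H; apply in_or_app; auto).
    f_equal. apply IHM2. intros u Hu. unfold Defs.upd. destruct (V_eq_dec u v); auto.
    apply H. apply in_or_app; right. apply remove_var_In; auto.
  - rewrite (IHM1 s t), (IHM2 s t); auto; intros; apply H; apply in_or_app; auto.
Qed.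

Lemma H3 : forall l s x y, ~ In y (flat_map (fun v => fv (s v)) (remove_var l x)) ->
  remove_var (flat_map (fun v => fv (upd s x (tv y) v)) l) y = flat_map (fun v => fv (s v)) (remove_var l x).
Proof.
  induction l as [|a l IH]; intros s x y H; simpl; auto.
  rewrite remove_var_app. unfold Defs.upd at 1. simpl in H |- *.
  destruct (V_eq_dec a x).
  - simpl. destruct (V_eq_dec y y); [|congruence]. simpl. apply IH.
    unfold Defs.remove_var in H |- *. simpl in H. destruct (V_eq_dec a x); [|congruence]. exact H.
  - unfold Defs.remove_var at 3. simpl. destruct (V_eq_dec a x); [congruence|].
    simpl. simpl in H. unfold Defs.remove_var in H at 1. simpl in H.
    destruct (V_eq_dec a x); [congruence|]. simpl in H.
    rewrite remove_var_notin by (intro; apply H; apply in_or_app; auto).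
    f_equal. apply IH. intro; apply H; apply in_or_app; auto.
Qed.

Lemma fv_act : forall M s, fv (act M s) = flat_map (fun v => fv (s v)) (fv M).
Proof.
  induction M; intros s; simpl; auto.
  - rewrite app_nil_r; auto.
  - rewrite flat_map_app, IHM1, IHM2, H3; auto. apply Xs_fresh.
  - rewrite flat_map_app, IHM1, IHM2, H3; auto. apply Xs_fresh.
  - rewrite flat_map_app, IHM1, IHM2; auto.
Qed.

Lemma act_comp : forall M s t, act (act M s) t = act M (fun v => act (s v) t).
Proof.
  induction M; intros s t; simpl; auto.
  - set (y1 := Xs s (remove_var (fv M2) v)).
    set (y2 := Xs t (remove_var (fv (act M2 (upd s v (tv y1)))) y1)).
    set (y3 := Xs (fun v0 => act (s v0) t) (remove_var (fv M2) v)).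
    assert (E : y2 = y3).
    { unfold y2, y3, Defs.Xs. rewrite fv_act, H3 by apply Xs_fresh.
      rewrite flat_map_flat_map. f_equal. apply flat_map_ext_in. intros; rewrite fv_act; auto. }
    rewrite E, IHM1, IHM2. f_equal. apply act_ext. intros u Hu. unfold Defs.upd at 1 3.
    destruct (V_eq_dec u v).
    + simpl. unfold Defs.upd. destruct (V_eq_dec y1 y1); congruence.
    + apply act_ext. intros w Hw. unfold Defs.upd. destruct (V_eq_dec w y1); auto.
      exfalso. apply (Xs_fresh s (remove_var (fv M2) v)). fold y1. rewrite <- e.
      apply in_flat_map. exists u. split; auto. apply remove_var_In; auto.
  - set (y1 := Xs s (remove_var (fv M2) v)).
    set (y2 := Xs t (remove_var (fv (act M2 (upd s v (tv y1)))) y1)).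
    set (y3 := Xs (fun v0 => act (s v0) t) (remove_var (fv M2) v)).
    assert (E : y2 = y3).
    { unfold y2, y3, Defs.Xs. rewrite fv_act, H3 by apply Xs_fresh.
      rewrite flat_map_flat_map. f_equal. apply flat_map_ext_in. intros; rewrite fv_act; auto. }
    rewrite E, IHM1, IHM2. f_equal. apply act_ext. intros u Hu. unfold Defs.upd at 1 3.
    destruct (V_eq_dec u v).
    + simpl. unfold Defs.upd. destruct (V_eq_dec y1 y1); congruence.
    + apply act_ext. intros w Hw. unfold Defs.upd. destruct (V_eq_dec w y1); auto.
      exfalso. apply (Xs_fresh s (remove_var (fv M2) v)). fold y1. rewrite <- e.
      apply in_flat_map. exists u. split; auto. apply remove_var_In; auto.
  - rewrite IHM1, IHM2; auto.
Qed.

Lemma subst_upd : forall B x u s N, ~ In u (remove_var (fv B) x) ->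
  act (subst1 B x (tv u)) (upd s u N) = act B (upd s x N).
Proof.
  intros B x u s N H. unfold Defs.subst1. rewrite act_comp. apply act_ext.
  intros v Hv. unfold Defs.upd at 1 3. destruct (V_eq_dec v x).
  - simpl. unfold Defs.upd. destruct (V_eq_dec u u); congruence.
  - simpl. unfold Defs.iota, Defs.upd. destruct (V_eq_dec v u); auto.
    subst. exfalso; apply H; apply remove_var_In; auto.
Qed.

Lemma fresh_rv : forall y l x, ~ In y l -> ~ In y (remove_var l x).
Proof. intros y l x H H'. apply remove_var_In in H'. tauto. Qed.

Lemma alpha_refl : forall M, alpha M M.
Proof.
  induction M; try constructor; auto.
  - apply alpha_lam with (y := X' (fv M2)); auto; apply fresh_rv, X'_fresh.
  - apply alpha_pi with (y := X' (fv M2)); auto; apply fresh_rv, X'_fresh.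
Qed.

Lemma alpha_sym : forall M N, alpha M N -> alpha N M.
Proof.
  induction 1; try constructor; auto.
  - eapply alpha_lam; eauto.
  - eapply alpha_pi; eauto.
Qed.

Lemma fv_subst_var : forall M x z, ~ In z (remove_var (fv M) x) ->
  remove_var (fv (subst1 M x (tv z))) z = remove_var (fv M) x.
Proof.
  intros M x z H. unfold Defs.subst1. rewrite fv_act.
  rewrite H3. unfold Defs.iota; simpl; apply flat_map_single.
  unfold Defs.iota; simpl; rewrite flat_map_single; auto.
Qed.

Lemma alpha_fv : forall M N, alpha M N -> fv M = fv N.
Proof.
  induction 1; simpl; auto.
  - congruence.
  - rewrite IHalpha, <- (fv_subst_var M x y), <- (fv_subst_var M' x' y), H2; auto.
  - rewrite IHalpha, <- (fv_subst_var M x y), <- (fv_subst_var M' x' y), H2; auto.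
Qed.

Lemma alpha_act : forall M N, alpha M N -> forall s, act M s = act N s.
Proof.
  induction 1; intros s; simpl; auto.
  - rewrite IHalpha1, IHalpha2; auto.
  - assert (E : remove_var (fv M) x = remove_var (fv M') x').
    { rewrite <- (fv_subst_var M x y), <- (fv_subst_var M' x' y), H2; auto. }
    rewrite E, IHalpha. f_equal.
    rewrite <- (subst_upd M x y) by auto. rewrite <- (subst_upd M' x' y) by auto.
    rewrite H2; auto.
  - assert (E : remove_var (fv M) x = remove_var (fv M') x').
    { rewrite <- (fv_subst_var M x y), <- (fv_subst_var M' x' y), H2; auto. }
    rewrite E, IHalpha. f_equal.
    rewrite <- (subst_upd M x y) by auto. rewrite <- (subst_upd M' x' y) by auto.
    rewrite H2; auto.
Qed.

Lemma SA : forall B s t, (forall v, In v (fv B) -> alpha (s v) (t v)) -> alpha (act B s) (act B t).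
Proof.
  induction B; intros s t H; simpl in *.
  - constructor.
  - apply H; auto.
  - assert (E : Xs s (remove_var (fv B2) v) = Xs t (remove_var (fv B2) v)).
    { unfold Defs.Xs; f_equal. apply flat_map_ext_in. intros u Hu. apply alpha_fv. apply H.
      apply in_or_app; right; auto. }
    rewrite E. set (y := Xs t (remove_var (fv B2) v)).
    set (z := X' (fv (act B2 (upd s v (tv y))) ++ fv (act B2 (upd t v (tv y))))).
    apply alpha_lam with (y := z).
    + apply IHB1. intros; apply H; apply in_or_app; auto.
    + apply fresh_rv. intro; apply (X'_fresh (fv (act B2 (upd s v (tv y))) ++ fv (act B2 (upd t v (tv y))))). apply in_or_app; auto.
    + apply fresh_rv. intro; apply (X'_fresh (fv (act B2 (upd s v (tv y))) ++ fv (act B2 (upd t v (tv y))))). apply in_or_app; auto.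
    + unfold Defs.subst1. rewrite !act_comp. apply act_ext. intros u Hu.
      unfold Defs.upd at 1 3. destruct (V_eq_dec u v); auto.
      apply alpha_act. apply H. apply in_or_app; right; apply remove_var_In; auto.
  - assert (E : Xs s (remove_var (fv B2) v) = Xs t (remove_var (fv B2) v)).
    { unfold Defs.Xs; f_equal. apply flat_map_ext_in. intros u Hu. apply alpha_fv. apply H.
      apply in_or_app; right; auto. }
    rewrite E. set (y := Xs t (remove_var (fv B2) v)).
    set (z := X' (fv (act B2 (upd s v (tv y))) ++ fv (act B2 (upd t v (tv y))))).
    apply alpha_pi with (y := z).
    + apply IHB1. intros; apply H; apply in_or_app; auto.
    + apply fresh_rv. intro; apply (X'_fresh (fv (act B2 (upd s v (tv y))) ++ fv (act B2 (upd t v (tv y))))). apply in_or_app; auto.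
    + apply fresh_rv. intro; apply (X'_fresh (fv (act B2 (upd s v (tv y))) ++ fv (act B2 (upd t v (tv y))))). apply in_or_app; auto.
    + unfold Defs.subst1. rewrite !act_comp. apply act_ext. intros u Hu.
      unfold Defs.upd at 1 3. destruct (V_eq_dec u v); auto.
      apply alpha_act. apply H. apply in_or_app; right; apply remove_var_In; auto.
  - constructor; [apply IHB1 | apply IHB2]; intros; apply H; apply in_or_app; auto.
Qed.

Lemma AIota : forall M t, (forall v, In v (fv M) -> t v = tv v) -> alpha M (act M t).
Proof.
  induction M; intros t H; simpl in *.
  - constructor.
  - rewrite H; auto. constructor.
  - set (y := Xs t (remove_var (fv M2) v)).
    set (z := X' (fv M2 ++ fv (act M2 (upd t v (tv y))))).
    apply alpha_lam with (y := z).
    + apply IHM1; intros; apply H; apply in_or_app; auto.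
    + apply fresh_rv. intro; apply (X'_fresh (fv M2 ++ fv (act M2 (upd t v (tv y))))). apply in_or_app; auto.
    + apply fresh_rv. intro; apply (X'_fresh (fv M2 ++ fv (act M2 (upd t v (tv y))))). apply in_or_app; auto.
    + unfold Defs.subst1. rewrite act_comp. apply act_ext. intros u Hu.
      unfold Defs.upd at 1 2. destruct (V_eq_dec u v).
      * simpl. unfold Defs.upd. destruct (V_eq_dec y y); congruence.
      * rewrite H by (apply in_or_app; right; apply remove_var_In; auto).
        simpl. unfold Defs.upd, Defs.iota. destruct (V_eq_dec u y); auto.
        exfalso. apply (Xs_fresh t (remove_var (fv M2) v)). fold y. rewrite <- e.
        apply in_flat_map. exists u. split. apply remove_var_In; auto.
        rewrite H by (apply in_or_app; right; apply remove_var_In; auto). simpl; auto.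
  - set (y := Xs t (remove_var (fv M2) v)).
    set (z := X' (fv M2 ++ fv (act M2 (upd t v (tv y))))).
    apply alpha_pi with (y := z).
    + apply IHM1; intros; apply H; apply in_or_app; auto.
    + apply fresh_rv. intro; apply (X'_fresh (fv M2 ++ fv (act M2 (upd t v (tv y))))). apply in_or_app; auto.
    + apply fresh_rv. intro; apply (X'_fresh (fv M2 ++ fv (act M2 (upd t v (tv y))))). apply in_or_app; auto.
    + unfold Defs.subst1. rewrite act_comp. apply act_ext. intros u Hu.
      unfold Defs.upd at 1 2. destruct (V_eq_dec u v).
      * simpl. unfold Defs.upd. destruct (V_eq_dec y y); congruence.
      * rewrite H by (apply in_or_app; right; apply remove_var_In; auto).
        simpl. unfold Defs.upd, Defs.iota. destruct (V_eq_dec u y); auto.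
        exfalso. apply (Xs_fresh t (remove_var (fv M2) v)). fold y. rewrite <- e.
        apply in_flat_map. exists u. split. apply remove_var_In; auto.
        rewrite H by (apply in_or_app; right; apply remove_var_In; auto). simpl; auto.
  - constructor; [apply IHM1 | apply IHM2]; intros; apply H; apply in_or_app; auto.
Qed.

Lemma incl_rv : forall l l' x, incl l l' -> incl (remove_var l x) (remove_var l' x).
Proof. intros l l' x H u Hu. apply remove_var_In in Hu. apply remove_var_In. destruct Hu; auto. Qed.

Lemma beta_fv : forall M N, beta_step M N -> incl (fv N) (fv M).
Proof.
  induction 1; simpl.
  - destruct H. unfold Defs.subst1. rewrite fv_act. intros u Hu.
    apply in_flat_map in Hu. destruct Hu as [v [Hv Hu]]. simpl.
    unfold Defs.upd, Defs.iota in Hu. destruct (V_eq_dec v x).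
    + apply in_or_app; right; auto.
    + simpl in Hu. destruct Hu as [Hu|[]]. subst. apply in_or_app; left; apply in_or_app; right.
      apply remove_var_In; auto.
  - apply incl_app; [apply incl_appl, incl_refl | apply incl_appr, incl_rv; auto].
  - apply incl_app; [apply incl_appl, incl_refl | apply incl_appr, incl_rv; auto].
  - apply incl_app; [apply incl_appl; auto | apply incl_appr, incl_refl].
  - apply incl_app; [apply incl_appl; auto | apply incl_appr, incl_refl].
  - apply incl_app; [apply incl_appl; auto | apply incl_appr, incl_refl].
  - apply incl_app; [apply incl_appl, incl_refl | apply incl_appr; auto].
Qed.

Lemma fresh_upd_alpha : forall s L v N, In v L ->
  alpha (s v) (act (s v) (upd iota (Xs s L) N)).
Proof.
  intros s L v N Hv. apply AIota. intros u Hu. unfold Defs.upd, Defs.iota.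
  destruct (V_eq_dec u (Xs s L)); auto. exfalso. apply (Xs_fresh s L).
  rewrite <- e. apply in_flat_map; eauto.
Qed.

Lemma notin_Xs : forall s L v u, In v L -> In u (fv (s v)) -> u <> Xs s L.
Proof.
  intros s L v u Hv Hu E. apply (Xs_fresh s L). rewrite <- E. apply in_flat_map; eauto.
Qed.

Lemma beta_act : forall M N, beta_step M N -> forall s, exists K, beta_step (act M s) K /\ alpha K (act N s).
Proof.
  induction 1; intros s.
  - destruct H. simpl. set (y := Xs s (remove_var (fv M) x)).
    exists (subst1 (act M (upd s x (tv y))) y (act N s)). split.
    + apply bs_contr, beta_c.
    + unfold Defs.subst1. rewrite !act_comp. apply SA. intros v Hv.
      unfold Defs.upd at 1 3. destruct (V_eq_dec v x).
      * simpl. unfold Defs.upd. destruct (V_eq_dec y y); [|congruence]. apply alpha_refl.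
      * simpl. unfold Defs.iota. apply alpha_sym. apply fresh_upd_alpha. apply remove_var_In; auto.
  - simpl. set (y := Xs s (remove_var (fv M) x)). set (y' := Xs s (remove_var (fv M') x)).
    destruct (IHbeta_step (upd s x (tv y))) as [K0 [HK1 HK2]].
    exists (tlam y (act A s) K0). split; [apply bs_lam_body; auto|].
    set (z := X' (fv K0 ++ fv (act M' (upd s x (tv y'))))).
    apply alpha_lam with (y := z).
    + apply alpha_refl.
    + apply fresh_rv. intro; apply (X'_fresh (fv K0 ++ fv (act M' (upd s x (tv y'))))). apply in_or_app; auto.
    + apply fresh_rv. intro; apply (X'_fresh (fv K0 ++ fv (act M' (upd s x (tv y'))))). apply in_or_app; auto.
    + unfold Defs.subst1. rewrite (alpha_act _ _ HK2). rewrite !act_comp. apply act_ext.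
      intros v Hv. unfold Defs.upd at 1 3. destruct (V_eq_dec v x).
      * simpl. unfold Defs.upd. destruct (V_eq_dec y y); [|congruence]. destruct (V_eq_dec y' y'); congruence.
      * apply act_ext. intros u Hu. unfold Defs.upd.
        destruct (V_eq_dec u y).
        { exfalso. apply (notin_Xs s (remove_var (fv M) x) v u); auto.
          apply remove_var_In; split; auto. apply (beta_fv _ _ H); auto. }
        destruct (V_eq_dec u y'); auto.
        exfalso. apply (notin_Xs s (remove_var (fv M') x) v u); auto.
        apply remove_var_In; split; auto.
  - simpl. set (y := Xs s (remove_var (fv M) x)). set (y' := Xs s (remove_var (fv M') x)).
    destruct (IHbeta_step (upd s x (tv y))) as [K0 [HK1 HK2]].
    exists (tpi y (act A s) K0). split; [apply bs_pi_body; auto|].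
    set (z := X' (fv K0 ++ fv (act M' (upd s x (tv y'))))).
    apply alpha_pi with (y := z).
    + apply alpha_refl.
    + apply fresh_rv. intro; apply (X'_fresh (fv K0 ++ fv (act M' (upd s x (tv y'))))). apply in_or_app; auto.
    + apply fresh_rv. intro; apply (X'_fresh (fv K0 ++ fv (act M' (upd s x (tv y'))))). apply in_or_app; auto.
    + unfold Defs.subst1. rewrite (alpha_act _ _ HK2). rewrite !act_comp. apply act_ext.
      intros v Hv. unfold Defs.upd at 1 3. destruct (V_eq_dec v x).
      * simpl. unfold Defs.upd. destruct (V_eq_dec y y); [|congruence]. destruct (V_eq_dec y' y'); congruence.
      * apply act_ext. intros u Hu. unfold Defs.upd.
        destruct (V_eq_dec u y).
        { exfalso. apply (notin_Xs s (remove_var (fv M) x) v u); auto.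
          apply remove_var_In; split; auto. apply (beta_fv _ _ H); auto. }
        destruct (V_eq_dec u y'); auto.
        exfalso. apply (notin_Xs s (remove_var (fv M') x) v u); auto.
        apply remove_var_In; split; auto.
  - simpl. set (y := Xs s (remove_var (fv M) x)).
    destruct (IHbeta_step s) as [K0 [HK1 HK2]].
    exists (tlam y K0 (act M (upd s x (tv y)))). split; [apply bs_lam_dom; auto|].
    apply alpha_lam with (y := X' (fv (act M (upd s x (tv y))))); auto;
      apply fresh_rv, X'_fresh.
  - simpl. set (y := Xs s (remove_var (fv M) x)).
    destruct (IHbeta_step s) as [K0 [HK1 HK2]].
    exists (tpi y K0 (act M (upd s x (tv y)))). split; [apply bs_pi_dom; auto|].
    apply alpha_pi with (y := X' (fv (act M (upd s x (tv y))))); auto;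
      apply fresh_rv, X'_fresh.
  - simpl. destruct (IHbeta_step s) as [K0 [HK1 HK2]].
    exists (tapp K0 (act P s)). split; [apply bs_app_l; auto|]. constructor; auto; apply alpha_refl.
  - simpl. destruct (IHbeta_step s) as [K0 [HK1 HK2]].
    exists (tapp (act P s) K0). split; [apply bs_app_r; auto|]. constructor; auto; apply alpha_refl.
Qed.

Lemma conv_act : forall A B, beta_conv A B -> forall s, beta_conv (act A s) (act B s).
Proof.
  induction 1; intros s.
  - rewrite (alpha_act _ _ H). apply bc_refl.
  - destruct (beta_act _ _ H s) as [K [H1 H2]]. eapply bc_trans; [apply bc_beta; eauto | apply bc_alpha; auto].
  - apply bc_refl.
  - apply bc_sym; auto.
  - eapply bc_trans; eauto.
Qed.

Lemma typing_wf : forall G M A, typ G M A -> wfc G.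
Proof. induction 1; auto. Qed.

Lemma wf_inv : forall x A G, wfc ((x, A) :: G) -> wfc G /\ (exists s, typ G A (tc s)) /\ ~ In x (dom G).
Proof. intros x A G H. inversion H; subst. eauto. Qed.

Lemma incl_dom : forall G D, incl G D -> incl (dom G) (dom D).
Proof.
  intros G D H u Hu. unfold Defs.dom in *. apply in_map_iff in Hu.
  destruct Hu as [[a b] [E Hin]]. simpl in E; subst. apply (in_map fst _ (u, b)); auto.
Qed.

Lemma in_dom : forall (G : list (V * tm)) v T, In (v, T) G -> In v (dom G).
Proof. intros. unfold Defs.dom. apply (in_map fst _ (v, T)); auto. Qed.

Lemma weakening : forall G M A, typ G M A -> forall D, wfc D -> incl G D -> typ D M A.
Proof.
  induction 1; intros D HD Hinc.
  - apply ty_sort; auto.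
  - apply ty_var; auto.
  - eapply ty_prod; eauto. intros y Hy. apply H2.
    + intro Hy'. apply Hy. apply (incl_dom G D); auto.
    + eapply wf_cons; eauto.
    + apply incl_cons; [left; auto | apply incl_tl; auto].
  - eapply ty_abs; eauto.
    + intros z Hz. apply H2.
      * intro Hy'. apply Hz. apply (incl_dom G D); auto.
      * eapply wf_cons; eauto.
      * apply incl_cons; [left; auto | apply incl_tl; auto].
    + intros z Hz. apply H5.
      * intro Hy'. apply Hz. apply (incl_dom G D); auto.
      * eapply wf_cons; eauto.
      * apply incl_cons; [left; auto | apply incl_tl; auto].
  - eapply ty_app; eauto.
  - eapply ty_conv; eauto.
Qed.

Lemma wf_entry : forall G, wfc G -> forall v T, In (v, T) G -> exists s, typ G T (tc s).
Proof.
  induction 1; intros v T Hin; simpl in Hin.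
  - destruct Hin.
  - assert (HW : wfc ((x, A) :: G)) by (eapply wf_cons; eauto).
    destruct Hin as [E | Hin].
    + inversion E; subst. exists s. eapply weakening; eauto. apply incl_tl, incl_refl.
    + destruct (IHwf v T Hin) as [s' Hs']. exists s'. eapply weakening; eauto. apply incl_tl, incl_refl.
Qed.

Lemma in_subst_fv : forall B x N u, In u (remove_var (fv B) x) -> In u (fv (subst1 B x N)).
Proof.
  intros B x N u Hu. apply remove_var_In in Hu. destruct Hu as [Hu Hne].
  unfold Defs.subst1. rewrite fv_act. apply in_flat_map. exists u. split; auto.
  unfold Defs.upd, Defs.iota. destruct (V_eq_dec u x); [congruence|]. simpl; auto.
Qed.

Lemma fv_typing : forall G M A, typ G M A -> incl (fv M) (dom G).
Proof.
  induction 1; simpl.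
  - intros u [].
  - intros u [E|[]]; subst. eapply in_dom; eauto.
  - apply incl_app; auto. intros u Hu.
    set (y := X' (dom G ++ fv B)).
    assert (Hy : ~ In y (dom G)) by (intro; apply (X'_fresh (dom G ++ fv B)); apply in_or_app; auto).
    specialize (H2 y Hy u (in_subst_fv _ _ _ _ Hu)). simpl in H2. destruct H2 as [E|H2]; auto.
    exfalso. apply (X'_fresh (dom G ++ fv B)). fold y. rewrite E. apply in_or_app; right.
    apply remove_var_In in Hu; tauto.
  - apply incl_app; auto. intros u Hu.
    set (w := X' (dom G ++ fv M)).
    assert (Hy : ~ In w (dom G)) by (intro; apply (X'_fresh (dom G ++ fv M)); apply in_or_app; auto).
    specialize (H5 w Hy u (in_subst_fv _ _ _ _ Hu)). simpl in H5. destruct H5 as [E|H5]; auto.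
    exfalso. apply (X'_fresh (dom G ++ fv M)). fold w. rewrite E. apply in_or_app; right.
    apply remove_var_In in Hu; tauto.
  - apply incl_app; auto.
  - auto.
Qed.

Lemma wf_fv : forall G v T, wfc G -> In (v, T) G -> incl (fv T) (dom G).
Proof.
  intros G v T HG Hin. destruct (wf_entry G HG v T Hin) as [s Hs]. eapply fv_typing; eauto.
Qed.

Lemma wf_app : forall G1 G2, wfc (G1 ++ G2) -> wfc G2.
Proof.
  induction G1 as [|[a b] G1 IH]; intros G2 H; simpl in H; auto.
  apply IH. apply wf_inv in H. tauto.
Qed.

Lemma dom_swap : forall G1 y (A A' : tm) G, dom (G1 ++ (y, A') :: G) = dom (G1 ++ (y, A) :: G).
Proof. intros. unfold Defs.dom. rewrite !map_app. reflexivity. Qed.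

Lemma ctx_conv : forall G0 P Q, typ G0 P Q -> forall G1 y A A' G s,
  G0 = G1 ++ (y, A) :: G -> typ G A' (tc s) -> beta_conv A A' ->
  wfc (G1 ++ (y, A') :: G) -> typ (G1 ++ (y, A') :: G) P Q.
Proof.
  induction 1; intros G1 yy A0 A' G' s0 E HA' Hc Hwf; subst.
  - apply ty_sort; auto.
  - apply in_app_or in H0. destruct H0 as [H0 | [E | H0]].
    + apply ty_var; auto. apply in_or_app; auto.
    + inversion E; subst.
      assert (Hw2 : wfc ((x, A) :: G')) by (eapply wf_app; eauto).
      apply wf_inv in Hw2. destruct Hw2 as [_ [[s1 Hs1] _]].
      eapply ty_conv. apply ty_var; auto. apply in_or_app; right; left; auto.
      apply bc_sym; eauto.
      eapply weakening; eauto. intros p Hp. apply in_or_app; right; right; auto.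
    + apply ty_var; auto. apply in_or_app; right; right; auto.
  - eapply ty_prod; eauto. intros z Hz. rewrite (dom_swap _ _ A0) in Hz.
    apply (H2 z Hz ((z, A) :: G1) yy A0 A' G' s0); auto.
    simpl. eapply wf_cons; eauto. rewrite (dom_swap _ _ A0); auto.
  - eapply ty_abs; eauto.
    + intros z Hz. rewrite (dom_swap _ _ A0) in Hz.
      apply (H2 z Hz ((z, A) :: G1) yy A0 A' G' s0); auto.
      simpl. eapply wf_cons; eauto. rewrite (dom_swap _ _ A0); auto.
    + intros z Hz. rewrite (dom_swap _ _ A0) in Hz.
      apply (H5 z Hz ((z, A) :: G1) yy A0 A' G' s0); auto.
      simpl. eapply wf_cons; eauto. rewrite (dom_swap _ _ A0); auto.
  - eapply ty_app; eauto.
  - eapply ty_conv; eauto.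
Qed.

Lemma alpha_pi_inv : forall x A B N, alpha (tpi x A B) N -> exists x' A' B' y,
  N = tpi x' A' B' /\ alpha A A' /\ ~ In y (remove_var (fv B) x) /\ ~ In y (remove_var (fv B') x') /\
  subst1 B x (tv y) = subst1 B' x' (tv y).
Proof. intros x A B N H; inversion H; subst; eauto 12. Qed.

Lemma alpha_lam_inv : forall x A B N, alpha (tlam x A B) N -> exists x' A' B' y,
  N = tlam x' A' B' /\ alpha A A' /\ ~ In y (remove_var (fv B) x) /\ ~ In y (remove_var (fv B') x') /\
  subst1 B x (tv y) = subst1 B' x' (tv y).
Proof. intros x A B N H; inversion H; subst; eauto 12. Qed.

Lemma alpha_app_inv : forall M N P, alpha (tapp M N) P -> exists M' N', P = tapp M' N' /\ alpha M M' /\ alpha N N'.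
Proof. intros M N P H; inversion H; subst; eauto. Qed.

Lemma subst_rename : forall B x u N, ~ In u (remove_var (fv B) x) ->
  act (subst1 B x (tv u)) (upd iota u N) = subst1 B x N.
Proof. intros. apply subst_upd; auto. Qed.

Lemma subst_alpha_eq : forall B x B' x' y0 y, ~ In y0 (remove_var (fv B) x) -> ~ In y0 (remove_var (fv B') x') ->
  subst1 B x (tv y0) = subst1 B' x' (tv y0) -> subst1 B x (tv y) = subst1 B' x' (tv y).
Proof.
  intros. rewrite <- (subst_rename B x y0 (tv y)), <- (subst_rename B' x' y0 (tv y)) by auto. congruence.
Qed.

Lemma alpha_inv : forall G M T, typ G M T -> forall M', alpha M M' -> typ G M' T.
Proof.
  induction 1; intros MM Hal.
  - inversion Hal; subst; apply ty_sort; auto.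
  - inversion Hal; subst; apply ty_var; auto.
  - destruct (alpha_pi_inv _ _ _ _ Hal) as (x' & A' & B' & y0 & -> & HA & Hf1 & Hf2 & Heq).
    assert (HA' : typ G A' (tc s1)) by auto.
    apply ty_prod with s1 s2; auto. intros y Hy.
    rewrite <- (subst_alpha_eq B x B' x' y0 y) by auto.
    apply (ctx_conv _ _ _ (H1 y Hy) [] y A A' G s1); auto. apply bc_alpha; auto.
    simpl. eapply wf_cons; eauto. eapply typing_wf; eauto.
  - destruct (alpha_lam_inv _ _ _ _ Hal) as (x' & A' & M' & y0 & -> & HA & Hf1 & Hf2 & Heq).
    assert (HA' : typ G A' (tc s1)) by auto.
    assert (HG : wfc G) by (eapply typing_wf; eauto).
    apply ty_conv with (A := tpi y A' B) (s := s3).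
    + apply ty_abs with s1 s2 s3; auto.
      * intros z Hz. apply (ctx_conv _ _ _ (H1 z Hz) [] z A A' G s1); auto. apply bc_alpha; auto.
        simpl. eapply wf_cons; eauto.
      * intros z Hz. rewrite <- (subst_alpha_eq M x M' x' y0 z) by auto.
        apply (ctx_conv _ _ _ (H4 z Hz) [] z A A' G s1); auto. apply bc_alpha; auto.
        simpl. eapply wf_cons; eauto.
    + apply bc_alpha. apply alpha_pi with (y := X' (fv B)).
      apply alpha_sym; auto. apply fresh_rv, X'_fresh. apply fresh_rv, X'_fresh. auto.
    + apply ty_prod with s1 s2; auto.
  - destruct (alpha_app_inv _ _ _ Hal) as (M1 & N1 & -> & HM & HN).
    assert (HB : alpha (subst1 B x N) (subst1 B x N1)).
    { unfold Defs.subst1. apply SA. intros v _. unfold Defs.upd. destruct (V_eq_dec v x); auto. apply alpha_refl. }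
    apply ty_conv with (A := subst1 B x N1) (s := s).
    + apply ty_app with (A := A) (s := s); auto.
    + apply bc_alpha, alpha_sym; auto.
    + auto.
  - eapply ty_conv; eauto.
Qed.

Lemma conv_to_act : forall G M T s t, typ G M T -> typ G T (tc s) ->
  (forall v, In v (fv T) -> t v = tv v) -> typ G M (act T t).
Proof.
  intros G M T s t H1 H2 H3. eapply ty_conv; eauto. apply bc_alpha, AIota; auto.
  eapply alpha_inv; eauto. apply AIota; auto.
Qed.

Lemma alpha_upd : forall B x s w,
  alpha (act B (upd s x (tv w))) (subst1 (act B (upd s x (tv (Xs s (remove_var (fv B) x))))) (Xs s (remove_var (fv B) x)) (tv w)).
Proof.
  intros B x s w. unfold Defs.subst1. rewrite act_comp. apply SA. intros v Hv.
  set (y := Xs s (remove_var (fv B) x)). unfold Defs.upd. destruct (V_eq_dec v x).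
  - simpl. destruct (V_eq_dec y y); [apply alpha_refl | congruence].
  - apply AIota. intros u Hu. destruct (V_eq_dec u y); [|reflexivity].
    exfalso. apply (notin_Xs s (remove_var (fv B) x) v u); auto. apply remove_var_In; auto.
Qed.

Lemma sub_ext : forall G D s u w A, ~ In u (dom G) -> ~ In u (fv A) ->
  (forall v T, In (v, T) G -> ~ In u (fv T)) -> wfc ((w, act A s) :: D) ->
  (forall v T, In (v, T) G -> typ D (s v) (act T s)) ->
  forall v T, In (v, T) ((u, A) :: G) -> typ ((w, act A s) :: D) (upd s u (tv w) v) (act T (upd s u (tv w))).
Proof.
  intros G D s u w A H1 H2 H3 H4 H5 v T Hin. destruct Hin as [E | Hin].
  - inversion E; subst. unfold Defs.upd at 1. destruct (V_eq_dec v v); [|congruence].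
    rewrite (act_ext T (upd s v (tv w)) s). apply ty_var; auto. left; auto.
    intros v0 Hv0. unfold Defs.upd. destruct (V_eq_dec v0 v); auto. subst; tauto.
  - assert (Hne : v <> u) by (intro; subst; apply H1; eapply in_dom; eauto).
    unfold Defs.upd at 1. destruct (V_eq_dec v u); [congruence|].
    rewrite (act_ext T (upd s u (tv w)) s).
    eapply weakening; eauto. apply incl_tl, incl_refl.
    intros v0 Hv0. unfold Defs.upd. destruct (V_eq_dec v0 u); auto. subst. exfalso; eapply H3; eauto.
Qed.

Lemma fresh_ctx : forall (G : list (V * tm)) l v T, In (v, T) G ->
  ~ In (X' (l ++ flat_map (fun p => fv (snd p)) G)) (fv T).
Proof.
  intros G l v T Hin H. apply (X'_fresh (l ++ flat_map (fun p => fv (snd p)) G)).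
  apply in_or_app; right. apply in_flat_map. exists (v, T); auto.
Qed.

Lemma subst_lemma : forall G M A, typ G M A -> forall D sg, wfc D ->
  (forall v T, In (v, T) G -> typ D (sg v) (act T sg)) -> typ D (act M sg) (act A sg).
Proof.
  induction 1; intros D sg HD Hs; simpl.
  - apply ty_sort; auto.
  - apply Hs; auto.
  - apply ty_prod with s1 s2; auto. specialize (IHtyping D sg HD Hs). simpl in IHtyping.
    intros w Hw.
    set (L := dom G ++ fv A ++ fv B).
    set (u := X' (L ++ flat_map (fun p => fv (snd p)) G)).
    assert (Hu : ~ In u (L ++ flat_map (fun p => fv (snd p)) G)) by apply X'_fresh.
    unfold L in Hu. rewrite !in_app_iff in Hu.
    assert (HD' : wfc ((w, act A sg) :: D)) by (eapply wf_cons; eauto).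
    assert (R := H2 u ltac:(tauto) ((w, act A sg) :: D) (upd sg u (tv w)) HD'
      (sub_ext G D sg u w A ltac:(tauto) ltac:(tauto) (fun v T Hin => fresh_ctx G L v T Hin) HD' Hs)).
    simpl in R. rewrite subst_upd in R by (apply fresh_rv; tauto).
    eapply alpha_inv; eauto. apply alpha_upd.
  - specialize (IHtyping D sg HD Hs). simpl in IHtyping.
    set (L := dom G ++ fv A ++ fv B ++ fv M).
    set (u := X' (L ++ flat_map (fun p => fv (snd p)) G)).
    assert (Hu : ~ In u (L ++ flat_map (fun p => fv (snd p)) G)) by apply X'_fresh.
    unfold L in Hu. rewrite !in_app_iff in Hu.
    assert (HB : forall w, ~ In w (dom D) ->
      typ ((w, act A sg) :: D) (subst1 (act B (upd sg y (tv (Xs sg (remove_var (fv B) y))))) (Xs sg (remove_var (fv B) y)) (tv w)) (tc s2)).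
    { intros w Hw.
      assert (HD' : wfc ((w, act A sg) :: D)) by (eapply wf_cons; eauto).
      assert (R := H2 u ltac:(tauto) ((w, act A sg) :: D) (upd sg u (tv w)) HD'
        (sub_ext G D sg u w A ltac:(tauto) ltac:(tauto) (fun v T Hin => fresh_ctx G L v T Hin) HD' Hs)).
      simpl in R. rewrite subst_upd in R by (apply fresh_rv; tauto).
      eapply alpha_inv; eauto. apply alpha_upd. }
    apply ty_abs with s1 s2 s3; auto.
    intros w Hw.
    assert (HD' : wfc ((w, act A sg) :: D)) by (eapply wf_cons; eauto).
    assert (R := H5 u ltac:(tauto) ((w, act A sg) :: D) (upd sg u (tv w)) HD'
      (sub_ext G D sg u w A ltac:(tauto) ltac:(tauto) (fun v T Hin => fresh_ctx G L v T Hin) HD' Hs)).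
    rewrite subst_upd in R by (apply fresh_rv; tauto).
    rewrite subst_upd in R by (apply fresh_rv; tauto).
    eapply ty_conv. eapply alpha_inv; eauto. apply alpha_upd.
    apply bc_alpha, alpha_upd. apply HB; auto.
  - specialize (IHtyping1 D sg HD Hs). specialize (IHtyping2 D sg HD Hs). specialize (IHtyping3 D sg HD Hs).
    simpl in IHtyping1, IHtyping3.
    set (x' := Xs sg (remove_var (fv B) x)) in *.
    assert (Hal : alpha (subst1 (act B (upd sg x (tv x'))) x' (act N sg)) (act (subst1 B x N) sg)).
    { unfold Defs.subst1. rewrite !act_comp. apply SA. intros v Hv. unfold Defs.upd.
      destruct (V_eq_dec v x).
      - simpl. destruct (V_eq_dec x' x'); [apply alpha_refl | congruence].
      - unfold Defs.iota. simpl. apply alpha_sym. apply AIota. intros u Hu.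
        destruct (V_eq_dec u x'); [|reflexivity].
        exfalso. apply (notin_Xs sg (remove_var (fv B) x) v u); auto. apply remove_var_In; auto. }
    eapply ty_conv. eapply ty_app; eauto. eapply alpha_inv; eauto. apply alpha_sym; eauto.
    apply bc_alpha; eauto. eauto.
  - eapply ty_conv; eauto. apply conv_act; auto.
Qed.

Lemma type_correct : forall G M T, typ G M T -> (exists s, T = tc s) \/ (exists s, typ G T (tc s)).
Proof.
  induction 1; eauto.
  - right. eapply wf_entry; eauto.
  - right. exists s3. apply ty_prod with s1 s2; auto.
Qed.

Lemma gen_pi : forall G P T, typ G P T -> forall x A B, P = tpi x A B -> exists s1 s2,
  typ G A (tc s1) /\ forall y, ~ In y (dom G) -> typ ((y, A) :: G) (subst1 B x (tv y)) (tc s2).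
Proof.
  induction 1; intros x0 A0 B0 E; try discriminate.
  - inversion E; subst. eauto.
  - eauto.
Qed.

Lemma subst_top : forall G x A B s N, typ G (tpi x A B) (tc s) -> typ G N A ->
  exists s2, typ G (subst1 B x N) (tc s2).
Proof.
  intros G x A B s N HP HN.
  destruct (gen_pi _ _ _ HP x A B eq_refl) as (s1 & s2 & HA & HB).
  assert (HG : wfc G) by (eapply typing_wf; eauto).
  set (L := dom G ++ fv A ++ fv B).
  set (y := X' (L ++ flat_map (fun p => fv (snd p)) G)).
  assert (Hy : ~ In y (L ++ flat_map (fun p => fv (snd p)) G)) by apply X'_fresh.
  unfold L in Hy. rewrite !in_app_iff in Hy.
  assert (R := subst_lemma _ _ _ (HB y ltac:(tauto)) G (upd iota y N) HG).
  simpl in R. rewrite subst_rename in R by (apply fresh_rv; tauto).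
  exists s2. apply R. intros v T Hin. destruct Hin as [E | Hin].
  - injection E as E1 E2. subst v T. unfold Defs.upd at 1. destruct (V_eq_dec y y); [|congruence].
    apply conv_to_act with s1; auto.
    intros v0 Hv0. unfold Defs.upd. destruct (V_eq_dec v0 y); auto. subst; tauto.
  - assert (Hne : v <> y) by (intro; subst; apply Hy; left; left; eapply in_dom; eauto).
    unfold Defs.upd at 1. destruct (V_eq_dec v y); [congruence|].
    destruct (wf_entry G HG v T Hin) as [sT HT].
    apply conv_to_act with sT; auto. apply ty_var; auto.
    intros v0 Hv0. unfold Defs.upd. destruct (V_eq_dec v0 y); auto. subst.
    exfalso. eapply (fresh_ctx G L v T Hin); eauto.
Qed.

Lemma ren : forall y A G P Q w, typ ((y, A) :: G) P Q -> ~ In w (dom G) ->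
  typ ((w, A) :: G) (act P (upd iota y (tv w))) (act Q (upd iota y (tv w))).
Proof.
  intros y A G P Q w H Hw.
  assert (H1 := typing_wf _ _ _ H). apply wf_inv in H1. destruct H1 as [HG [[s HA] Hy]].
  assert (HD : wfc ((w, A) :: G)) by (eapply wf_cons; eauto).
  apply (subst_lemma _ _ _ H); auto.
  intros v T Hin. destruct Hin as [E | Hin].
  - inversion E; subst. unfold Defs.upd at 1. destruct (V_eq_dec v v); [|congruence].
    apply conv_to_act with s. apply ty_var; auto. left; auto.
    eapply weakening; eauto. apply incl_tl, incl_refl.
    intros v0 Hv0. unfold Defs.upd. destruct (V_eq_dec v0 v); auto. subst.
    exfalso. apply Hy. eapply fv_typing; eauto.
  - assert (Hne : v <> y) by (intro; subst; apply Hy; eapply in_dom; eauto).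
    unfold Defs.upd at 1. destruct (V_eq_dec v y); [congruence|].
    destruct (wf_entry G HG v T Hin) as [sT HT].
    apply conv_to_act with sT. apply ty_var; auto. right; auto.
    eapply weakening; eauto. apply incl_tl, incl_refl.
    intros v0 Hv0. unfold Defs.upd. destruct (V_eq_dec v0 y); auto. subst.
    exfalso. apply Hy. eapply wf_fv; eauto.
Qed.

Scheme wfs_mut := Induction for wf_s Sort Prop with tys_mut := Induction for typing_s Sort Prop.
Combined Scheme wfs_tys_mut from wfs_mut, tys_mut.

Lemma main_lemma :
  (forall G, Defs.wf_s V V_eq_dec encode decode C chi' Ax Rl G -> wfc G) /\
  (forall G M A, Defs.typing_s V V_eq_dec encode decode C chi' Ax Rl G M A -> typ G M A).
Proof.
  apply wfs_tys_mut; intros.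
  - apply wf_nil.
  - eapply wf_cons; eauto.
  - apply ty_sort; auto.
  - apply ty_var; auto.
  - apply ty_prod with s1 s2; auto. intros w Hw.
    assert (R := ren _ _ _ _ _ w H0 Hw). simpl in R.
    rewrite subst_rename in R by auto. exact R.
  - apply ty_abs with s1 s2 s3; auto.
    + intros w Hw. assert (R := ren _ _ _ _ _ w H0 Hw). simpl in R.
      rewrite subst_rename in R by auto. exact R.
    + intros w Hw. assert (R := ren _ _ _ _ _ w H1 Hw).
      rewrite !subst_rename in R by auto. exact R.
  - destruct (type_correct _ _ _ H) as [[s E] | [s Hs]]; [discriminate|].
    destruct (subst_top _ _ _ _ _ _ Hs H0) as [s2 Hs2].
    apply ty_app with (A := A) (s := s2); auto.
  - eapply ty_conv; eauto.
Qed.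

End Proofs.

Theorem mainTheorem20
  (V : Type) (V_eq_dec : forall x y : V, {x = y} + {x <> y})
  (encode : V -> nat) (decode : nat -> V)
  (encode_decode : forall n, encode (decode n) = n)
  (C : Type)
  (chi' : list nat -> nat) (chi'_fresh : forall ns, ~ In (chi' ns) ns)
  (Ax : C -> C -> Prop) (Rl : C -> C -> C -> Prop) :
  (forall G, @wf_s V V_eq_dec encode decode C chi' Ax Rl G ->
             @wf V V_eq_dec encode decode C chi' Ax Rl G) /\
  (forall G M A, @typing_s V V_eq_dec encode decode C chi' Ax Rl G M A ->
                 @typing V V_eq_dec encode decode C chi' Ax Rl G M A).
Proof.
  exact (main_lemma V V_eq_dec encode decode encode_decode C chi' chi'_fresh Ax Rl).
Qed.
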